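(* Let $z$ with $d(z,\mathcal{M})=O(\sigma)$, projection $z^*$, and $\Delta=\|z-z^*\|_2$. Choose Cartesian coordinates in which $z^*$ is the origin, $T_{z^*}\mathcal{M}$ is spanned by the first $d$ coordinate directions, and $z=(0,\dots,0,\Delta,0,\dots,0)$ with $\Delta$ in the $(d+1)$-th coordinate. Let $r_0=C\sigma$ and write $\mu_z^{\mathbb{B}}=\mathbb{E}_{Y\sim\nu}(Y\mid Y\in\mathcal{B}_D(z,r_0))=(\mu^{(1)},\dots,\mu^{(D)})$. If $|\Delta-\mu^{(d+1)}|\ge c_1\sigma$ and $|\mu^{(i)}|\le c_2\sigma^2\sqrt{\log(1/\sigma)}$ for all $i\ne d+1$, then $\sin\{\Theta(\mu_z^{\mathbb{B}}-z,\ z^*-z)\}\le C\sigma\sqrt{\log(1/\sigma)}$, where $\Theta(a,b)$ is the angle between vectors $a,b$.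
   Context: Model: $\mathcal{M}\subset\mathbb{R}^D$ is a compact, twice-differentiable, $d$-dimensional embedded submanifold with $d$-dimensional Hausdorff volume at most $V$ and reach at least $\tau>0$. $X$ is uniform on $\mathcal{M}$, $\xi\sim N(0,\sigma^2I_D)$ independent, and $Y=X+\xi$ has density $\nu$. $z^*=\arg\min_{x\in\mathcal{M}}\|x-z\|_2$. $\sigma$ is sufficiently small; $c_1,c_2,C$ are constants independent of $\sigma$. *)

(* Defs.v *)
From mathcomp Require Import all_boot all_order all_algebra.
From mathcomp Require Import reals exp.
Set Implicit Arguments. Unset Strict Implicit. Unset Printing Implicit Defensive.
Import Order.TTheory GRing.Theory Num.Theory.
Local Open Scope ring_scope.

Definition dotv (R : realType) (D : nat) (u v : 'rV[R]_D) : R :=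
  \sum_(i < D) u 0 i * v 0 i.
Definition normv (R : realType) (D : nat) (u : 'rV[R]_D) : R :=
  Num.sqrt (dotv u u).

(* sin of the angle Theta(a,b) between a and b:
   sin Theta = sqrt(|a|^2|b|^2 - <a,b>^2) / (|a| |b|)  (0 if a or b is 0). *)
Definition sin_angle (R : realType) (D : nat) (a b : 'rV[R]_D) : R :=
  Num.sqrt (dotv a a * dotv b b - (dotv a b) ^+ 2) / (normv a * normv b).

(* Main.v *)
Require Import Defs.
From mathcomp Require Import all_boot all_order all_algebra.
From mathcomp Require Import reals exp.
From mathcomp Require Import ring lra.
Import Order.TTheory GRing.Theory Num.Theory.
Local Open Scope ring_scope.

Section S.
Variables (R : realType) (D : nat) (i0 : 'I_D) (Delta : R) (mu : 'rV[R]_D).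
Definition zz : 'rV[R]_D := Delta *: delta_mx 0 i0.
Definition SS := \sum_(i < D | i != i0) mu 0 i ^+ 2.
Definition mm := mu 0 i0 - Delta.

Lemma zzE i : zz 0 i = Delta * (i == i0)%:R.
Proof. by rewrite /zz !mxE. Qed.

Lemma daa : dotv (mu - zz) (mu - zz) = mm ^+ 2 + SS.
Proof.
rewrite /dotv (bigD1 i0) //= !mxE !eqxx /= mulr1 -expr2; congr (_ + _).
rewrite /SS.
by apply: eq_bigr => i /negPf Hi; rewrite !mxE Hi /= mulr0 subr0 expr2.
Qed.

Lemma dbb : dotv (0 - zz) (0 - zz) = Delta ^+ 2.
Proof.
rewrite /dotv (bigD1 i0) //= !mxE !eqxx /= mulr1 big1 ?addr0.
  by rewrite sub0r mulrNN expr2.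
by move=> i /negPf Hi; rewrite !mxE Hi /= mulr0 subr0 mul0r.
Qed.

Lemma dab : dotv (mu - zz) (0 - zz) = - (Delta * mm).
Proof.
rewrite /dotv (bigD1 i0) //= !mxE !eqxx /= mulr1 big1 ?addr0.
  by rewrite /mm sub0r mulrN mulrC.
by move=> i /negPf Hi; rewrite !mxE Hi /= /= !mulr0 !subr0 mulr0.
Qed.

Lemma SS0 : 0 <= SS.
Proof. by apply: sumr_ge0 => i _; exact: sqr_ge0. Qed.

Lemma sin_eq : 0 < Delta -> sin_angle (mu - zz) (0 - zz) = Num.sqrt SS / Num.sqrt (mm ^+ 2 + SS).
Proof.
move=> Dp.
rewrite /sin_angle /normv daa dbb dab sqrrN exprMn.
have -> : (mm ^+ 2 + SS) * Delta ^+ 2 - Delta ^+ 2 * mm ^+ 2 = Delta ^+ 2 * SS by ring.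
rewrite sqrtrM ?sqr_ge0 // sqrtr_sqr ger0_norm ?ltW //.
rewrite [_ * Delta]mulrC -mulf_div divff ?mul1r // gt_eqF //.
Qed.
End S.
Arguments SS {R D}. Arguments mm {R D}. Arguments zz {R D}. Arguments sin_eq {R D}. Arguments SS0 {R D}.

Lemma SS_bound (R : realType) (D : nat) (i0 : 'I_D) (mu : 'rV[R]_D) (B : R) :
  0 <= B -> (forall i : 'I_D, i != i0 -> `|mu 0 i| <= B) ->
  Num.sqrt (SS i0 mu) <= D%:R * B.
Proof.
move=> B0 HB.
have D1 : 1 <= D%:R :> R by by rewrite ler1n (leq_ltn_trans (leq0n _) (ltn_ord i0)).
have h1 : SS i0 mu <= \sum_(i < D | i != i0) B ^+ 2.
  apply: ler_sum => i /HB; rewrite ler_norml => /andP[a b]; nra.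
have h2 : \sum_(i < D | i != i0) B ^+ 2 <= \sum_(i < D) B ^+ 2.
  by rewrite [leRHS](bigD1 i0) //= lerDr sqr_ge0.
have e2 : \sum_(i < D) B ^+ 2 = D%:R * B ^+ 2 by rewrite sumr_const card_ord mulr_natl.
rewrite e2 in h2.
have h3 : D%:R * B ^+ 2 <= (D%:R * B) ^+ 2 by nra.
rewrite -(ger0_norm (_ : 0 <= D%:R * B)); last by rewrite mulr_ge0.
rewrite -sqrtr_sqr ler_sqrt ?sqr_ge0 //.
by apply: le_trans h3; apply: le_trans h2.
Qed.

Theorem proposition3p2 (R : realType) (D d : nat) (hd : (d < D)%N)
  (K c1 c2 : R) : 0 < K -> 0 < c1 -> 0 < c2 ->
  exists C : R, 0 < C /\ exists sigma0 : R, 0 < sigma0 /\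
  forall (sigma Delta : R) (mu : 'rV[R]_D),
    0 < sigma -> sigma < sigma0 ->
    0 <= Delta -> Delta <= K * sigma ->
    let i0 : 'I_D := Ordinal hd in
    let z : 'rV[R]_D := Delta *: delta_mx 0 i0 in
    let zstar : 'rV[R]_D := 0 in
    c1 * sigma <= `|Delta - mu 0 i0| ->
    (forall i : 'I_D, i != i0 ->
       `|mu 0 i| <= c2 * sigma ^+ 2 * Num.sqrt (ln (sigma^-1))) ->
    sin_angle (mu - z) (zstar - z) <= C * sigma * Num.sqrt (ln (sigma^-1)).
Proof.
move=> K0 c10 c20.
set k := D%:R * c2 / c1.
have k0 : 0 <= k by rewrite /k divr_ge0 // ?mulr_ge0 // ltW.
have kc : k * c1 = D%:R * c2 by rewrite /k divfK // gt_eqF.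
exists (k + 1); split; first by rewrite ltr_wpDl.
exists 1; split => // sigma Delta mu s0 _ D0 _ i0 z zstar H1 H2.
set L := Num.sqrt _ in H2 *.
have L0 : 0 <= L by exact: sqrtr_ge0.
have sL0 : 0 <= (k + 1) * sigma * L.
  by rewrite mulr_ge0 // mulr_ge0 ?addr_ge0 // ltW.
rewrite /z /zstar; have [->|Dp] := eqVneq Delta 0.
  rewrite /sin_angle /normv scale0r subr0.
  rewrite subrr.
  have -> : dotv (0 : 'rV[R]_D) 0 = 0 by rewrite /dotv big1 // => i _; rewrite mxE mulr0.
  by rewrite sqrtr0 [X in _ / X]mulr0 invr0 mulr0.
have Dp' : 0 < Delta by rewrite lt_def Dp D0.
rewrite -/(zz i0 Delta) sin_eq //.
have hS := @SS_bound _ _ _ _ (c2 * sigma ^+ 2 * L) (mulr_ge0 (mulr_ge0 (ltW c20) (sqr_ge0 _)) L0) H2.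
have hy : c1 * sigma <= Num.sqrt (mm i0 Delta mu ^+ 2 + SS i0 mu).
  apply: (le_trans H1); rewrite distrC -sqrtr_sqr ler_sqrt ?addr_ge0 ?sqr_ge0 ?SS0 //.
  by rewrite lerDl SS0.
have yp : 0 < Num.sqrt (mm i0 Delta mu ^+ 2 + SS i0 mu) by apply: lt_le_trans hy; rewrite mulr_gt0.
rewrite ler_pdivrMr //; apply: (le_trans hS).
apply: (@le_trans _ _ ((k * sigma * L) * (c1 * sigma))).
  rewrite le_eqVlt; apply/orP; left; apply/eqP.
  have -> : k * sigma * L * (c1 * sigma) = (k * c1) * (sigma ^+ 2 * L) by ring.
  by rewrite kc; ring.
apply: ler_pM => //.
- by rewrite mulr_ge0 // mulr_ge0 // ltW.
- by rewrite mulr_ge0 // ltW.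
- apply: ler_wpM2r => //; apply: ler_wpM2r; [exact: ltW | by rewrite lerDl].
Qed.
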